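(* Let $I\in\{0,1\}^{n\times m}$, $i\in X$, $j\in Y$. Then $\mathcal{E}(I)_{ij}=1$ if and only if all of the following hold: (a) $I_{ij}=1$; (b) for every $i'\in X$ with $\{i'\}^\uparrow\subsetneq\{i\}^\uparrow$ we have $I_{i'j}=0$; (c) for every $j'\in Y$ with $\{j'\}^\downarrow\subsetneq\{j\}^\downarrow$ we have $I_{ij'}=0$.
   Context: $X=\{1,\dots,n\}$, $Y=\{1,\dots,m\}$. For $C\subseteq X$, $D\subseteq Y$: $C^{\uparrow}=\{j\in Y\mid \forall i\in C: I_{ij}=1\}$, $D^{\downarrow}=\{i\in X\mid \forall j\in D: I_{ij}=1\}$ (so $\{i\}^\uparrow$ is the set of columns with a 1 in row $i$, $\{j\}^\downarrow$ the set of rows with a 1 in column $j$). $\mathcal{B}(I)=\{\langle C,D\rangle\mid C^\uparrow=D, D^\downarrow=C\}$ ordered by $\langle C_1,D_1\rangle\leq\langle C_2,D_2\rangle$ iff $C_1\subseteq C_2$; $\gamma(i)=\langle\{i\}^{\uparrow\downarrow},\{i\}^\uparrow\rangle$, $\mu(j)=\langle\{j\}^\downarrow,\{j\}^{\downarrow\uparrow}\rangle$, $\mathcal{I}_{ij}=\{c\in\mathcal{B}(I)\mid\gamma(i)\leq c\leq\mu(j)\}$. $\mathcal{E}(I)\in\{0,1\}^{n\times m}$: $\mathcal{E}(I)_{ij}=1$ iff $\mathcal{I}_{ij}$ is non-empty and minimal w.r.t. $\subseteq$ among the non-empty sets $\mathcal{I}_{i'j'}$. *)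

(* Defs.v *)
From mathcomp Require Import all_boot all_algebra.
Set Implicit Arguments. Unset Strict Implicit. Unset Printing Implicit Defensive.

(* A Boolean matrix I in {0,1}^{n x m}: rows X = 'I_n, columns Y = 'I_m
   (0-based indices for {1..n}, {1..m}). *)
Section FCA.
Variables (n m : nat) (I : 'M[bool]_(n, m)).

Definition up (C : {set 'I_n}) : {set 'I_m} :=
  [set j | [forall i in C, I i j]].
Definition down (D : {set 'I_m}) : {set 'I_n} :=
  [set i | [forall j in D, I i j]].

Definition is_concept (c : {set 'I_n} * {set 'I_m}) : bool :=
  (up c.1 == c.2) && (down c.2 == c.1).

Definition concept_le (c1 c2 : {set 'I_n} * {set 'I_m}) : bool :=
  c1.1 \subset c2.1.

Definition gamma (i : 'I_n) : {set 'I_n} * {set 'I_m} :=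
  (down (up [set i]), up [set i]).
Definition mu (j : 'I_m) : {set 'I_n} * {set 'I_m} :=
  (down [set j], up (down [set j])).

Definition interval (i : 'I_n) (j : 'I_m) : {set {set 'I_n} * {set 'I_m}} :=
  [set c | is_concept c && concept_le (gamma i) c && concept_le c (mu j)].

Definition E (i : 'I_n) (j : 'I_m) : bool :=
  (interval i j != set0) &&
  [forall i' : 'I_n, forall j' : 'I_m,
     (interval i' j' != set0) ==> ~~ (interval i' j' \proper interval i j)].

End FCA.

(* Main.v *)
Require Import Defs.
From mathcomp Require Import all_boot all_algebra.

Section H.
Variables (n m : nat) (I : 'M[bool]_(n, m)).

Lemma galois (A : {set 'I_n}) (B : {set 'I_m}) :
  (A \subset down I B) = (B \subset up I A).
Proof.
apply/subsetP/subsetP => H x Hx; rewrite inE; apply/forallP => y;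
  apply/implyP => Hy.
- by have := H y Hy; rewrite inE => /forallP/(_ x)/implyP/(_ Hx).
- by have := H y Hy; rewrite inE => /forallP/(_ x)/implyP/(_ Hx).
Qed.

Lemma up1 i j : (j \in up I [set i]) = I i j.
Proof.
rewrite inE; apply/forallP/idP => [/(_ i)|H x]; first by rewrite set11.
by apply/implyP; rewrite inE => /eqP->.
Qed.

Lemma down1 i j : (i \in down I [set j]) = I i j.
Proof.
rewrite inE; apply/forallP/idP => [/(_ j)|H x]; first by rewrite set11.
by apply/implyP; rewrite inE => /eqP->.
Qed.

Lemma up_anti (A A' : {set 'I_n}) : A \subset A' -> up I A' \subset up I A.
Proof.
move=> H; apply/subsetP => x; rewrite !inE => /forallP Hx.
apply/forallP => y; apply/implyP => Hy.
by have := Hx y; rewrite (subsetP H _ Hy).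
Qed.

Lemma down_anti (B B' : {set 'I_m}) : B \subset B' -> down I B' \subset down I B.
Proof.
move=> H; apply/subsetP => x; rewrite !inE => /forallP Hx.
apply/forallP => y; apply/implyP => Hy.
by have := Hx y; rewrite (subsetP H _ Hy).
Qed.

Lemma updown (A : {set 'I_n}) : up I (down I (up I A)) = up I A.
Proof.
apply/eqP; rewrite eqEsubset; apply/andP; split.
  by apply: up_anti; rewrite galois.
by rewrite -galois.
Qed.

Lemma downup (B : {set 'I_m}) : down I (up I (down I B)) = down I B.
Proof.
apply/eqP; rewrite eqEsubset; apply/andP; split.
  by apply: down_anti; rewrite -galois.
by rewrite galois.
Qed.

Lemma gm_le i j : concept_le (gamma I i) (mu I j) = I i j.
Proof.
rewrite /concept_le galois updown -up1; exact: sub1set. Qed.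

Lemma gamma_in i j : I i j -> gamma I i \in Defs.interval I i j.
Proof.
move=> Hij; rewrite inE /is_concept /= updown !eqxx /= gm_le Hij andbT.
by rewrite /concept_le subxx.
Qed.

Lemma mu_in i j : I i j -> mu I j \in Defs.interval I i j.
Proof.
move=> Hij; rewrite inE /is_concept /= downup !eqxx /= gm_le Hij /=.
by rewrite /concept_le subxx.
Qed.

Lemma int_n0 i j : (Defs.interval I i j != set0) = I i j.
Proof.
apply/idP/idP => [/set0Pn [c]|H]; last by apply/set0Pn; exists (gamma I i); exact: gamma_in.
rewrite inE => /andP [/andP [_ H1] H2].
rewrite -down1; apply: (subsetP H2); apply: (subsetP H1).
have Hs : [set i] \subset down I (up I [set i]) by rewrite galois.
apply: (subsetP Hs); exact: set11.
Qed.

Lemma gg_le i i' : concept_le (gamma I i) (gamma I i') = (up I [set i'] \subset up I [set i]).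
Proof. by rewrite /concept_le /= galois updown. Qed.

Lemma mm_le j j' : concept_le (mu I j') (mu I j) = (down I [set j'] \subset down I [set j]).
Proof. by []. Qed.

Lemma cle_trans a b c : @concept_le n m a b -> concept_le b c -> concept_le a c.
Proof. exact: subset_trans. Qed.

End H.

Theorem lemma2 (n m : nat) (I : 'M[bool]_(n, m)) (i : 'I_n) (j : 'I_m) :
  E I i j <->
  [/\ I i j,
      (forall i' : 'I_n, up I [set i'] \proper up I [set i] -> I i' j = false)
    & (forall j' : 'I_m, down I [set j'] \proper down I [set j] -> I i j' = false)].
Proof.
split.
- rewrite /E int_n0 => /andP [Hij /forallP H].
  split => // [i'|j']; rewrite properE => /andP [Hs Hns]; apply/negbTE/negP => Hx.
  + have := H i' => /forallP/(_ j); rewrite int_n0 Hx /= properE.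
    apply/negP; rewrite negbK; apply/andP; split.
      apply/subsetP => c; rewrite !inE => /andP [/andP [-> Hg] ->].
      by rewrite andbT /=; apply: cle_trans Hg; rewrite gg_le.
    apply/subsetPn; exists (gamma I i); first exact: gamma_in.
    rewrite inE; apply/negP; case/andP; case/andP => _ Hc _; move/negP: Hns; apply; rewrite -gg_le; exact: Hc.
  + have := H i => /forallP/(_ j'); rewrite int_n0 Hx /= properE.
    apply/negP; rewrite negbK; apply/andP; split.
      apply/subsetP => c; rewrite !inE => /andP [/andP [-> ->] Hg].
      by rewrite /=; apply: cle_trans Hg _; rewrite mm_le.
    apply/subsetPn; exists (mu I j); first exact: mu_in.
    rewrite inE; apply/negP; case/andP => _ Hc.
    move/negP: Hns; apply; rewrite -mm_le; exact: Hc.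
- move=> [Hij Hb Hc]; rewrite /E int_n0 Hij /=.
  apply/forallP => i'; apply/forallP => j'; apply/implyP; rewrite int_n0 => Hx.
  apply/negP; rewrite properE => /andP [Hsub Hnsub].
  have Hg := subsetP Hsub _ (@gamma_in _ _ I _ _ Hx).
  have Hm := subsetP Hsub _ (@mu_in _ _ I _ _ Hx).
  rewrite inE in Hg; case/andP: Hg => /andP [_ Hg] _.
  rewrite inE in Hm; case/andP: Hm => _ Hm.
  have Si : up I [set i'] \subset up I [set i] by rewrite -gg_le; exact: Hg.
  have Tj : down I [set j'] \subset down I [set j] by rewrite -mm_le; exact: Hm.
  case: (boolP (up I [set i] \subset up I [set i'])) => HS.
  + have ES : up I [set i'] = up I [set i].
      by apply/eqP; rewrite eqEsubset; apply/andP; split; [exact: Si | exact: HS].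
    case: (boolP (down I [set j] \subset down I [set j'])) => HT.
    * have ET : down I [set j'] = down I [set j].
        by apply/eqP; rewrite eqEsubset; apply/andP; split; [exact: Tj | exact: HT].
      have EI : Defs.interval I i' j' = Defs.interval I i j.
        by rewrite /Defs.interval /gamma /mu ES ET.
      rewrite EI in Hnsub; move/negP: Hnsub; apply; exact: subxx.
    * have := Hc j'; rewrite properE Tj HT => /(_ isT); rewrite -up1 -ES up1 Hx.
      by [].
  + have := Hb i'; rewrite properE Si HS => /(_ isT); rewrite -down1.
    by rewrite (subsetP Tj) // down1.
Qed.
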